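(* Let $G=(V,E)$ be a finite graph with boundary $B\subseteq V$, $|B|\ge2$. Let $d_1\le\cdots\le d_{|B|}$ be the degrees in $G$ of the boundary vertices, and let $d_1'\le\cdots\le d_{|B|}'$ be the degree sequence of the induced subgraph $G'=(B,E(B,B))$. Let $S_1=\sum_{i=1}^{|B|}d_i$, $S_2=\sum_{i=1}^{|B|}d_i^2$, $S_1'=\sum_{i=1}^{|B|}d_i'$. Then for $k=1,2,\ldots,|B|$, $$\sigma_k(G,B)\le\frac{1}{|B|}\left\{S_1+\sqrt{\frac{k-1}{|B|-k+1}\Big[|B|(S_2+S_1')-S_1^2\Big]}\right\}\le\frac{1}{|B|}\left\{S_1+\sqrt{\frac{k-1}{|B|-k+1}\Big[|B|(S_2+S_1)-S_1^2\Big]}\right\}.$$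
   Context: A boundary is $B\subseteq V$ with $|B|\ge2$. $E(B,B)$ is the set of edges of $G$ with both endpoints in $B$. Rayleigh quotient: $R(f)=\frac{\sum_{\{x,y\}\in E}(f(x)-f(y))^2}{\sum_{x\in B}f(x)^2}$ ($+\infty$ if $f|_B=0$); for $1\le k\le|B|$, $\sigma_k(G,B)=\min_{W\subseteq\mathbb{R}^V,\dim W=k}\max_{0\ne f\in W}R(f)$. *)

(* Defs.v *)
From HB Require Import structures.
From mathcomp Require Import all_boot all_order all_algebra.
From mathcomp Require Import all_classical all_reals.
From mathcomp Require Import ereal.
Set Implicit Arguments. Unset Strict Implicit. Unset Printing Implicit Defensive.
Import Order.TTheory GRing.Theory Num.Theory.
Local Open Scope ring_scope.

Definition simple_graph (V : finType) (adj : rel V) : Prop :=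
  symmetric adj /\ irreflexive adj.

Definition fspace (R : realType) (V : finType) := {ffun V -> R^o}.

(* Dirichlet energy: sum over the (unordered) edges {x,y} of (f x - f y)^2.
   Each unordered edge is counted twice in the ordered double sum. *)
Definition energy (R : realType) (V : finType) (adj : rel V) (f : fspace R V) : R :=
  (\sum_(x : V) \sum_(y : V | adj x y) (f x - f y) ^+ 2) / 2.

Definition bnorm2 (R : realType) (V : finType) (B : {set V}) (f : fspace R V) : R :=
  \sum_(x in B) f x ^+ 2.

Definition rayleigh (R : realType) (V : finType) (adj : rel V) (B : {set V})
    (f : fspace R V) : \bar R :=
  if bnorm2 B f == 0 then +oo%E else (energy adj f / bnorm2 B f)%:E.

Definition steklov_sigma (R : realType) (V : finType) (adj : rel V) (B : {set V})
    (k : nat) : \bar R :=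
  ereal_inf [set ereal_sup [set rayleigh adj B f | f in [set f : fspace R V |
                 (f \in W)%VS /\ f != 0]]
            | W in [set W : {vspace fspace R V} | \dim W = k]].

Definition deg (V : finType) (adj : rel V) (x : V) : nat := #|[set y | adj x y]|.
Definition deg_in (V : finType) (adj : rel V) (B : {set V}) (x : V) : nat :=
  #|[set y in B | adj x y]|.

(* Main.v *)
Require Import Defs.
From HB Require Import structures.
From mathcomp Require Import all_boot all_order all_algebra.
From mathcomp Require Import all_classical all_reals.
From mathcomp Require Import ereal.
From mathcomp Require Import complex.
From mathcomp Require Import ring lra zify.
Import Order.TTheory GRing.Theory Num.Theory.
Set Implicit Arguments. Unset Strict Implicit. Unset Printing Implicit Defensive.
Local Open Scope ring_scope.


Section Spec.
Variable R : realType.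

Definition dotv n (u v : 'rV[R]_n) : R := (u *m v^T) 0 0.

Lemma dotvE n (u v : 'rV[R]_n) : dotv u v = \sum_(j < n) u 0 j * v 0 j.
Proof. by rewrite /dotv !mxE; apply: eq_bigr => j _; rewrite mxE. Qed.

Lemma dotvC n (u v : 'rV[R]_n) : dotv u v = dotv v u.
Proof. by rewrite !dotvE; apply: eq_bigr => j _; rewrite mulrC. Qed.

Lemma dotv_ge0 n (u : 'rV[R]_n) : 0 <= dotv u u.
Proof. by rewrite dotvE; apply: sumr_ge0 => j _; rewrite -expr2 sqr_ge0. Qed.

Lemma dotv_eq0 n (u : 'rV[R]_n) : dotv u u = 0 -> u = 0.
Proof.
rewrite dotvE => /eqP; rewrite psumr_eq0; last by move=> j _; rewrite -expr2 sqr_ge0.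
move=> /allP H; apply/rowP => j; rewrite mxE.
have := H j (mem_index_enum j); rewrite implyTb mulf_eq0 orbb => /eqP //.
Qed.

Lemma dotv_gt0 n (u : 'rV[R]_n) : u != 0 -> 0 < dotv u u.
Proof.
move=> u0; rewrite lt_def dotv_ge0 andbT; apply/eqP => /dotv_eq0 H.
by rewrite H eqxx in u0.
Qed.

Lemma dotv_linl n (a b : R) (x y w : 'rV[R]_n) :
  dotv (a *: x + b *: y) w = a * dotv x w + b * dotv y w.
Proof. by rewrite /dotv mulmxDl -!scalemxAl !mxE. Qed.

Lemma dotv_sym n (A : 'M[R]_n) (u v : 'rV[R]_n) : A^T = A ->
  dotv (u *m A) v = dotv u (v *m A).
Proof. by move=> hA; rewrite /dotv trmx_mul hA mulmxA. Qed.

Local Notation fc := (real_complex R).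

Lemma ReMx m n (w : 'rV[R[i]]_m) (M : 'M[R]_(m, n)) :
  map_mx (@complex.Re R) (w *m map_mx fc M) = map_mx (@complex.Re R) w *m M.
Proof.
apply/rowP => j; rewrite !mxE.
have -> : forall s : seq 'I_m, forall F : 'I_m -> R[i], complex.Re (\sum_(i <- s) F i) = \sum_(i <- s) complex.Re (F i).
  move=> s F; elim: s => [|a s IH]; first by rewrite !big_nil.
  by rewrite !big_cons -IH; case: (F a) => ? ?; case: (\sum_(i <- s) F i).
apply: eq_bigr => i _; rewrite !mxE; case: (w 0 i) => a b /=.
by rewrite mulr0 subr0.
Qed.

Lemma ImMx m n (w : 'rV[R[i]]_m) (M : 'M[R]_(m, n)) :
  map_mx (@complex.Im R) (w *m map_mx fc M) = map_mx (@complex.Im R) w *m M.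
Proof.
apply/rowP => j; rewrite !mxE.
have -> : forall s : seq 'I_m, forall F : 'I_m -> R[i], complex.Im (\sum_(i <- s) F i) = \sum_(i <- s) complex.Im (F i).
  move=> s F; elim: s => [|a s IH]; first by rewrite !big_nil.
  by rewrite !big_cons -IH; case: (F a) => ? ?; case: (\sum_(i <- s) F i).
apply: eq_bigr => i _; rewrite !mxE; case: (w 0 i) => a b /=.
by rewrite mulr0 add0r.
Qed.


Lemma ReZ n (z : R[i]) (v : 'rV[R[i]]_n) :
  map_mx (@complex.Re R) (z *: v) =
  complex.Re z *: map_mx (@complex.Re R) v - complex.Im z *: map_mx (@complex.Im R) v.
Proof. by apply/rowP => j; rewrite !mxE; case: z; case: (v 0 j). Qed.

Lemma ImZ n (z : R[i]) (v : 'rV[R[i]]_n) :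
  map_mx (@complex.Im R) (z *: v) =
  complex.Im z *: map_mx (@complex.Re R) v + complex.Re z *: map_mx (@complex.Im R) v.
Proof. by apply/rowP => j; rewrite !mxE; case: z; case: (v 0 j) => a b c d /=; rewrite addrC. Qed.

Lemma real_eigen n r (A : 'M[R]_n) (Bs : 'M[R]_(r, n)) : A^T = A -> (0 < r)%N ->
  row_free Bs -> (Bs *m A <= Bs)%MS ->
  exists v : 'rV[R]_n, exists a : R, [/\ (v <= Bs)%MS, v != 0 & v *m A = a *: v].
Proof.
move=> hA r0 hfree hsub.
set Cm := Bs *m A *m pinvmx Bs.
have hC : Cm *m Bs = Bs *m A by rewrite /Cm mulmxKpV.
have [z /eigenvalueP [w hw w0]] := eigenvalue_closed (map_mx fc Cm) r0.
set v' := w *m map_mx fc Bs.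
have hv' : v' *m map_mx fc A = z *: v'.
  by rewrite /v' -mulmxA -map_mxM -hC map_mxM mulmxA hw -scalemxAl.
have v'0 : v' != 0.
  rewrite /v' mulmx_free_eq0 // /row_free mxrank_map; exact: hfree.
set x := map_mx (@complex.Re R) v'.
set y := map_mx (@complex.Im R) v'.
have hxA : x *m A = complex.Re z *: x - complex.Im z *: y.
  by rewrite /x -ReMx hv' ReZ.
have hyA : y *m A = complex.Im z *: x + complex.Re z *: y.
  by rewrite /y -ImMx hv' ImZ.
have xy0 : (x != 0) || (y != 0).
  apply: contraR v'0; rewrite negb_or !negbK => /andP[/eqP hx /eqP hy].
  apply/eqP/rowP => j; move: hx hy => /rowP/(_ j) hx /rowP/(_ j) hy.
  have e1 : complex.Re (v' 0 j) = 0 by move: hx; rewrite /x mxE => ->; rewrite mxE.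
  have e2 : complex.Im (v' 0 j) = 0 by move: hy; rewrite /y mxE => ->; rewrite mxE.
  rewrite [RHS]mxE; move: e1 e2; case: (v' 0 j) => a b /= -> ->; by [].
have hb : complex.Im z = 0.
  have := dotv_sym x y hA; rewrite hxA hyA.
  rewrite -scaleNr dotv_linl.
  rewrite [dotv x (_ + _)]dotvC dotv_linl.
  move=> /eqP; rewrite -subr_eq0.
  have -> : complex.Re z * dotv x y + - complex.Im z * dotv y y -
    (complex.Im z * dotv x x + complex.Re z * dotv y x) =
    - (complex.Im z * (dotv x x + dotv y y)).
    by rewrite [dotv y x]dotvC; ring.
  rewrite oppr_eq0 mulf_eq0 => /orP[/eqP //|].
  have : 0 < dotv x x + dotv y y.
    case/orP: xy0 => h.
      by have := dotv_gt0 h; have := dotv_ge0 y; lra.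
    by have := dotv_gt0 h; have := dotv_ge0 x; lra.
  by move=> /gt_eqF ->.
have xsub : (x <= Bs)%MS by rewrite /x /v' ReMx submxMl.
have ysub : (y <= Bs)%MS by rewrite /y /v' ImMx submxMl.
case/orP: xy0 => h.
  exists x, (complex.Re z); split => //; by rewrite hxA hb scale0r subr0.
exists y, (complex.Re z); split => //; by rewrite hyA hb scale0r add0r.
Qed.


Lemma dotvZl n a (x w : 'rV[R]_n) : dotv (a *: x) w = a * dotv x w.
Proof. by rewrite /dotv -scalemxAl mxE. Qed.

Lemma dotvZr n a (x w : 'rV[R]_n) : dotv w (a *: x) = a * dotv w x.
Proof. by rewrite dotvC dotvZl dotvC. Qed.

Lemma mul_rows_diag n m (A : 'M[R]_n) (e : nat -> 'rV[R]_n) (d : nat -> R) :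
  (forall i, (i < m)%N -> e i *m A = d i *: e i) ->
  (\matrix_(i < m) e i) *m A = diag_mx (\row_(i < m) d i) *m \matrix_(i < m) e i.
Proof.
move=> he; apply/matrixP => i j; rewrite mul_diag_mx !mxE.
have -> : (\sum_k (\matrix_(i0 < m) e i0) i k * A k j) = (e i *m A) 0 j.
  by rewrite !mxE; apply: eq_bigr => k _; rewrite !mxE.
by rewrite he // mxE.
Qed.

Lemma spec_ind n (A : 'M[R]_n) : A^T = A -> forall m, (m <= n)%N ->
  exists (e : nat -> 'rV[R]_n) (d : nat -> R),
  (forall i j, (i < m)%N -> (j < m)%N -> dotv (e i) (e j) = (i == j)%:R) /\
  (forall i, (i < m)%N -> e i *m A = d i *: e i).
Proof.
move=> hA; elim=> [|m IH] hm.
  by exists (fun _ => 0), (fun _ => 0); split.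
have [e [d [ho he]]] := IH (ltnW hm).
pose E := \matrix_(i < m) e i.
pose U := kermx E^T.
have rU : (0 < \rank U)%N.
  rewrite mxrank_ker mxrank_tr subn_gt0; exact: leq_ltn_trans (rank_leq_row E) hm.
have hEA := mul_rows_diag he.
have hstab : (row_base U *m A <= row_base U)%MS.
  rewrite stablemx_row_base sub_kermx -mulmxA.
  have -> : A *m E^T = (E *m A)^T by rewrite trmx_mul hA.
  by rewrite hEA trmx_mul mulmxA mulmx_ker mul0mx.
have [v [a [vsub v0 hv]]] := real_eigen hA rU (row_base_free U) hstab.
have vU : (v <= U)%MS by move: vsub; rewrite (eq_row_base U).
have vE : v *m E^T = 0 by apply/sub_kermxP.
have hve : forall i, (i < m)%N -> dotv v (e i) = 0.
  move=> i hi; move: vE => /rowP/(_ (Ordinal hi)); rewrite !mxE dotvE.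
  by move=> H; rewrite -[RHS]H; apply: eq_bigr => k _; rewrite /E !mxE.
set s := Num.sqrt (dotv v v).
have s0 : 0 < s by rewrite sqrtr_gt0 dotv_gt0.
have s2 : s ^+ 2 = dotv v v by rewrite sqr_sqrtr // dotv_ge0.
set u := s^-1 *: v.
have huu : dotv u u = 1.
  rewrite /u dotvZl dotvZr -s2; field; exact: lt0r_neq0.
have hue : forall i, (i < m)%N -> dotv u (e i) = 0.
  by move=> i hi; rewrite /u dotvZl hve // mulr0.
exists (fun i => if i == m then u else e i), (fun i => if i == m then a else d i); split.
  move=> i j hi hj.
  case: eqP => [->|him]; case: eqP => [->|hjm].
  - by rewrite huu eqxx.
  - have hj' : (j < m)%N by rewrite ltn_neqAle -ltnS hj andbT; exact/eqP.
    by rewrite hue //; case: eqP => // hh; move: hj'; rewrite -hh ltnn.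
  - have hi' : (i < m)%N by rewrite ltn_neqAle -ltnS hi andbT; exact/eqP.
    by rewrite dotvC hue //; case: eqP => // hh; move: hi'; rewrite hh ltnn.
  - have hj' : (j < m)%N by rewrite ltn_neqAle -ltnS hj andbT; exact/eqP.
    have hi' : (i < m)%N by rewrite ltn_neqAle -ltnS hi andbT; exact/eqP.
    exact: ho.
move=> i hi; have [eim|him] := eqVneq i m.
  by rewrite /u -scalemxAl hv !scalerA mulrC.
apply: he; by rewrite ltn_neqAle -ltnS hi andbT.
Qed.

Lemma real_spectral n (A : 'M[R]_n) : A^T = A ->
  exists (E : 'M[R]_n) (d : 'rV[R]_n),
    E *m E^T = 1%:M /\ E *m A = diag_mx d *m E.
Proof.
move=> hA; have [e [d [ho he]]] := spec_ind hA (leqnn n).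
exists (\matrix_(i < n) e i), (\row_(i < n) d i); split; last exact: mul_rows_diag.
apply/matrixP => i j; rewrite !mxE.
transitivity (dotv (e i) (e j)); last exact: ho. rewrite dotvE; apply: eq_bigr => k _; rewrite !mxE //.
Qed.


Lemma spectral_traces n (A E : 'M[R]_n) (d : 'rV[R]_n) :
  E *m E^T = 1%:M -> E *m A = diag_mx d *m E ->
  \tr A = \sum_i d 0 i /\ \tr (A *m A) = \sum_i d 0 i ^+ 2.
Proof.
move=> h hEA; have hEt : E^T *m E = 1%:M := mulmx1C h.
have key : E *m A *m E^T = diag_mx d by rewrite hEA -mulmxA h mulmx1.
split.
  rewrite -mxtrace_diag -key -[A in LHS]mulmx1 -hEt mulmxA mxtrace_mulC mulmxA.
  by [].
have -> : A *m A = A *m A *m (E^T *m E) by rewrite hEt mulmx1.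
rewrite mulmxA mxtrace_mulC !mulmxA.
have -> : E *m A *m A *m E^T = (E *m A *m E^T) *m (E *m A *m E^T).
  by rewrite !mulmxA -[E *m A *m E^T *m E]mulmxA hEt mulmx1.
rewrite key /mxtrace; apply: eq_bigr => i _.
rewrite mul_diag_mx !mxE eqxx mulr1n expr2 //.
Qed.


Lemma cs_sum1 (I : finType) (P : {pred I}) (e : I -> R) :
  (\sum_(i in P) e i) ^+ 2 <= (\sum_(i in P) 1) * \sum_(i in P) e i ^+ 2.
Proof.
have H : 0 <= \sum_(i in P) \sum_(j in P) (e i - e j) ^+ 2.
  by apply: sumr_ge0 => i _; apply: sumr_ge0 => j _; exact: sqr_ge0.
have E : \sum_(i in P) \sum_(j in P) (e i - e j) ^+ 2 =
    (\sum_(i in P) e i ^+ 2) * (\sum_(i in P) 1) - ((\sum_(i in P) e i) * (\sum_(i in P) e i)) *+ 2 + (\sum_(i in P) e i ^+ 2) * (\sum_(i in P) 1).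
  transitivity (\sum_(i in P) (e i ^+ 2 * (\sum_(j in P) 1) - (e i * (\sum_(i in P) e i)) *+ 2 + (\sum_(i in P) e i ^+ 2))).
    apply: eq_bigr => i _.
    under eq_bigr do rewrite sqrrB.
    rewrite big_split sumrB /= mulr_sumr.
    rewrite sumrMnl -mulr_sumr.
    rewrite [e i ^+ 2 * _]mulr_sumr; congr (_ - _ + _); [by apply: eq_bigr => j _; rewrite mulr1 | by rewrite mulr_sumr].
  rewrite big_split sumrB /= !sumrMnl -mulr_suml -mulr_suml.
  congr (_ - _ + _); rewrite mulr_sumr; apply: eq_bigr => i _; by rewrite mulr1.
move: H; rewrite E; move: (\sum_(i in P) e i) (\sum_(i in P) e i ^+ 2) (\sum_(i in P) (1:R)) => S Q c.
have -> : Q * c - S * S *+ 2 + Q * c = (c * Q - S ^+ 2) * 2%:R by ring.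
by rewrite pmulr_lge0 ?ltr0n // subr_ge0.
Qed.

Lemma cs_sum (I : finType) (P : {pred I}) (e : I -> R) :
  (\sum_(i in P) e i) ^+ 2 <= #|P|%:R * \sum_(i in P) e i ^+ 2.
Proof. by rewrite -sumr_const cs_sum1. Qed.
Lemma contra_core (X A1 A2 V a q t s nn : R) : X^+2 <= t * A1 -> X^+2 <= s * A2 -> V = A1 + A2 -> 0 <= t * a -> t * a < X -> a^+2 * nn = q * V -> s <= t * q -> nn = t + s -> 0 < t -> 0 <= s -> 0 <= V -> False.
Proof.
move=> h1 h2 hV hta hX ha hq hn ht hs hV0.
have e1 : nn * X ^+ 2 <= t * s * V.
  have := ler_wpM2l hs h1; have := ler_wpM2l (ltW ht) h2. rewrite hn hV. move=> u1 u2.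
  have -> : (t + s) * X ^+ 2 = t * X ^+2 + s * X ^+ 2 by ring.
  have -> : t * s * (A1 + A2) = t * (s * A2) + s * (t * A1) by ring.
  exact: lerD.
have e2 : (t * a) ^+ 2 < X ^+ 2.
  by rewrite ltr_pXn2r // ?qualifE ?hta //; apply: le_trans hta (ltW hX).
have e3 : t * s * V <= nn * (t * a) ^+ 2.
  have -> : nn * (t * a) ^+ 2 = t * ((t * q) * V) by rewrite -mulrA -ha; ring.
  by rewrite -mulrA; apply: ler_wpM2l; [exact: ltW | exact: ler_wpM2r].
have nn0 : 0 < nn by rewrite hn; lra.
have h : nn * (t * a) ^+ 2 < nn * X ^+ 2 by rewrite ltr_pM2l.
by have := le_lt_trans (le_trans e1 e3) h; rewrite ltxx.
Qed.

Lemma count_bound n k (d : 'I_n -> R) : (1 <= k <= n)%N ->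
  (k <= #|[set i | (d i <= (\sum_i d i + Num.sqrt ((k.-1)%:R / (n - k).+1%:R *
        (n%:R * \sum_i d i ^+ 2 - (\sum_i d i) ^+ 2))) / n%:R)%R]|)%N.
Proof.
move=> /andP[k1 kn].
have n0 : (0 < n)%N by apply: leq_trans kn.
have nR : 0 < n%:R :> R by rewrite ltr0n.
set T := \sum_i d i; set T2 := \sum_i d i ^+ 2.
set q : R := (k.-1)%:R / (n - k).+1%:R.
set lam := (T + _) / _.
rewrite leqNgt; apply/negP => hlt.
set J := [set i | lam < d i].
have hJc : ~: J = [set i | d i <= lam].
  by apply/setP => i; rewrite !inE -leNgt.
set t := #|J|.
have hcard : (#|~: J| + t = n)%N by rewrite addnC cardsC card_ord.
move: hlt; rewrite -hJc => hlt.
have ht : ((n - k).+1 <= t)%N by move: hlt hcard; rewrite /t; move: #|~: J| #|J| => a b; lia.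
have htn : (t <= n)%N by rewrite -hcard leq_addl.
set mu := T / n%:R.
pose e i := d i - mu.
set V := \sum_i e i ^+ 2.
have hV : n%:R * V = n%:R * T2 - T ^+ 2.
  rewrite /V /e.
  under eq_bigr do rewrite sqrrB.
  rewrite big_split sumrB /= sumrMnl -mulr_suml sumr_const card_ord -/T -/T2 /mu.
  rewrite -mulr_natr; field; exact: lt0r_neq0.
have V0 : 0 <= V by apply: sumr_ge0 => i _; exact: sqr_ge0.
have q0 : 0 <= q by rewrite /q divr_ge0 ?ler0n.
set a := Num.sqrt (q * (n%:R * T2 - T ^+ 2)) / n%:R.
have a0 : 0 <= a by rewrite /a divr_ge0 ?sqrtr_ge0 ?ler0n.
have hlam : lam = mu + a by rewrite /lam /a /mu mulrDl.
have ha : a ^+ 2 * n%:R = q * V.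
  rewrite /a expr_div_n sqr_sqrtr; last by rewrite -hV mulr_ge0 // mulr_ge0 ?ler0n.
  rewrite -hV; field; exact: lt0r_neq0.
have hsum0 : \sum_i e i = 0.
  rewrite /e sumrB sumr_const card_ord /mu -/T; field; exact: lt0r_neq0.
set X := \sum_(i in J) e i.
have hXc : \sum_(i in ~: J) e i = - X.
  have := hsum0; rewrite (bigID (fun i => i \in J)) /= => H.
  apply/eqP; rewrite -addr_eq0 addrC; apply/eqP; rewrite -[RHS]H /X.
  by congr (_ + _); apply: eq_bigl => i; rewrite finset.in_setC.
have hV2 : V = \sum_(i in J) e i ^+ 2 + \sum_(i in ~: J) e i ^+ 2.
  rewrite /V (bigID (fun i => i \in J)) /=.
  by congr (_ + _); apply: eq_bigl => i; rewrite finset.in_setC.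
have t0 : (0 < t)%N by apply: leq_trans ht.
have hX : t%:R * a < X.
  have -> : t%:R * a = \sum_(i in J) a by rewrite sumr_const /t mulr_natl.
  rewrite /X; apply: ltr_sum.
    by move: t0; rewrite /t card_gt0 => /set0Pn [i hi]; apply/hasP; exists i => //; rewrite mem_index_enum.
  by move=> i; rewrite inE => hi; rewrite /e ltrBrDl -hlam.
have cs1 := cs_sum (mem J) e.
have cs2 := cs_sum (mem (~: J)) e.
rewrite -/X hXc sqrrN in cs2.
have hs : #|~: J| = (n - t)%N by rewrite cardsCs finset.setCK card_ord.
have hq : (n - t)%:R <= t%:R * q.
  rewrite /q mulrA ler_pdivlMr ?ltr0n // -!natrM ler_nat.
  rewrite mulnC; apply: leq_mul => //; move: ht htn; clear; lia.
apply: (contra_core (X := X) (A1 := \sum_(i in J) e i ^+ 2) (A2 := \sum_(i in ~: J) e i ^+ 2)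
   (V := V) (a := a) (q := q) (t := t%:R) (s := (n - t)%:R) (nn := n%:R)).
- exact: cs1.
- by rewrite -hs.
- exact: hV2.
- by rewrite mulr_ge0 ?ler0n.
- exact: hX.
- exact: ha.
- exact: hq.
- by rewrite -natrD subnKC.
- by rewrite ltr0n.
- exact: ler0n.
- exact: V0.
Qed.

End Spec.



Section Graph.
Variables (R : realType) (V : finType) (adj : rel V) (B : {set V}).
Hypothesis hsym : symmetric adj.
Hypothesis hirr : irreflexive adj.

Lemma deg_sum x : (deg adj x)%:R = \sum_y (adj x y)%:R :> R.
Proof.
rewrite /deg -sum1_card natr_sum big_mkcond /=; apply: eq_bigr => y _.
by rewrite inE; case: (adj x y).
Qed.

Lemma sum_ind (F : V -> R) x : \sum_(y | adj x y) F y = \sum_y (adj x y)%:R * F y.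
Proof. by rewrite big_mkcond; apply: eq_bigr => y _; case: (adj x y); rewrite ?mul1r ?mul0r. Qed.

Lemma energy_quad (f : fspace R V) : energy adj f =
  \sum_x \sum_y f x * f y * ((x == y)%:R * (deg adj x)%:R - (adj x y)%:R).
Proof.
rewrite /energy.
set P := \sum_x f x ^+ 2 * (deg adj x)%:R.
set M := \sum_x \sum_y (adj x y)%:R * (f x * f y).
have e1 : \sum_x \sum_(y | adj x y) (f x - f y) ^+ 2 = P *+ 2 - M *+ 2.
  under eq_bigr do rewrite sum_ind.
  transitivity (\sum_x \sum_y ((adj x y)%:R * f x ^+ 2 + (adj x y)%:R * f y ^+ 2
       - ((adj x y)%:R * (f x * f y)) *+ 2)).
    apply: eq_bigr => x _; apply: eq_bigr => y _; rewrite sqrrB; ring.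
  have hP : \sum_x \sum_y (adj x y)%:R * f x ^+ 2 = P.
    rewrite /P; apply: eq_bigr => x _; rewrite deg_sum mulr_sumr.
    by apply: eq_bigr => y _; rewrite mulrC.
  have hP' : \sum_x \sum_y (adj x y)%:R * f y ^+ 2 = P.
    rewrite exchange_big /= -hP; apply: eq_bigr => x _; apply: eq_bigr => y _.
    by rewrite hsym.
  under eq_bigr do rewrite sumrB big_split /=.
  rewrite sumrB big_split /= hP hP'.
  under eq_bigr do rewrite sumrMnl.
  by rewrite sumrMnl mulr2n.
have e2 : \sum_x \sum_y f x * f y * ((x == y)%:R * (deg adj x)%:R - (adj x y)%:R) = P - M.
  rewrite /P /M -sumrB; apply: eq_bigr => x _.
  under eq_bigr do rewrite mulrBr.
  rewrite sumrB; congr (_ - _).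
    rewrite (bigD1 x) //= big1 ?addr0; last by move=> y /negPf hy; rewrite eq_sym hy mul0r mulr0.
    by rewrite eqxx mul1r expr2.
  by apply: eq_bigr => y _; rewrite mulrC.
rewrite e1 e2 -mulrnBl -[(P - M) *+ 2]mulr_natr mulfK // pnatr_eq0.
Qed.


Local Notation n := #|B|.
Definition iota (i : 'I_n) : V := enum_val i.

Lemma iota_in i : iota i \in B.
Proof. exact: enum_valP. Qed.

Lemma iota_inj : injective iota.
Proof. exact: enum_val_inj. Qed.

Definition ext (u : 'rV[R]_n) : fspace R V := [ffun x => \sum_(i | iota i == x) u 0 i].

Lemma ext_iota u j : ext u (iota j) = u 0 j.
Proof.
rewrite ffunE (big_pred1 j) // => i; rewrite inj_eq //; exact: iota_inj.
Qed.

Lemma ext_out u x : x \notin B -> ext u x = 0.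
Proof.
move=> hx; rewrite ffunE big1 // => i /eqP hi.
by move: hx; rewrite -hi iota_in.
Qed.

Lemma extD a (u v : 'rV[R]_n) : ext (a *: u + v) = a *: ext u + ext v.
Proof.
apply/ffunP => x; rewrite !ffunE; under eq_bigr do rewrite !mxE.
by rewrite big_split /= scaler_sumr.
Qed.

Lemma ext_sum (I : finType) (c : I -> R) (w : I -> 'rV[R]_n) :
  ext (\sum_i c i *: w i) = \sum_i c i *: ext (w i).
Proof.
apply/ffunP => x; rewrite !ffunE sum_ffunE.
under eq_bigr do rewrite summxE.
rewrite exchange_big /=; apply: eq_bigr => i _.
rewrite !ffunE scaler_sumr; apply: eq_bigr => j _; rewrite !mxE //.
Qed.

Lemma ext_inj u : ext u = 0 -> u = 0.
Proof.
move=> h; apply/rowP => j; rewrite mxE -ext_iota h ffunE //.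
Qed.

Definition Lm : 'M[R]_n :=
  \matrix_(i, j) ((i == j)%:R * (deg adj (iota i))%:R - (adj (iota i) (iota j))%:R).

Lemma Lm_sym : Lm^T = Lm.
Proof.
apply/matrixP => i j; rewrite !mxE hsym eq_sym.
by case: eqVneq => [->|]; rewrite ?mul0r ?mul1r.
Qed.

Lemma sum_V_B (F : V -> R) : (forall x, x \notin B -> F x = 0) ->
  \sum_x F x = \sum_(i < n) F (iota i).
Proof.
move=> hF; rewrite (bigID (fun x => x \in B)) /= [X in _ + X]big1 ?addr0.
  by rewrite big_enum_val.
by move=> x hx; apply: hF.
Qed.

Lemma energy_ext u : energy adj (ext u) = dotv (u *m Lm) u.
Proof.
rewrite energy_quad dotvE.
rewrite sum_V_B; last by move=> x hx; apply: big1 => y _; rewrite ext_out // !mul0r.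
apply: eq_bigr => j _.
rewrite sum_V_B; last by move=> y hy; rewrite (ext_out _ hy) mulr0 mul0r.
rewrite !mxE mulr_suml; apply: eq_bigr => i _.
rewrite !ext_iota !mxE (inj_eq iota_inj).
rewrite [j == i]eq_sym [adj (iota j) _]hsym; case: eqVneq => [->|_]; rewrite ?mul0r ?mul1r; ring.
Qed.

Lemma bnorm_ext u : bnorm2 B (ext u) = dotv u u.
Proof.
rewrite /bnorm2 dotvE big_enum_val; apply: eq_bigr => i _.
by rewrite -/(iota i) ext_iota expr2.
Qed.


Lemma sumB_iota (F : V -> R) : \sum_(x in B) F x = \sum_(i < n) F (iota i).
Proof. exact: big_enum_val. Qed.

Lemma deg_in_sum x : (deg_in adj B x)%:R = \sum_(j < n) (adj x (iota j))%:R :> R.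
Proof.
rewrite -(sumB_iota (fun y => (adj x y)%:R)) /deg_in -sum1_card natr_sum.
rewrite big_mkcond [RHS]big_mkcond /=; apply: eq_bigr => y _.
by rewrite !inE; case: (y \in B); case: (adj x y).
Qed.

Lemma tr_Lm : \tr Lm = (\sum_(x in B) deg adj x)%:R.
Proof.
rewrite natr_sum sumB_iota /mxtrace; apply: eq_bigr => i _.
by rewrite mxE eqxx mul1r hirr subr0.
Qed.

Lemma tr_Lm2 : \tr (Lm *m Lm) =
  (\sum_(x in B) deg adj x ^ 2)%:R + (\sum_(x in B) deg_in adj B x)%:R.
Proof.
rewrite !natr_sum !sumB_iota -big_split /mxtrace; apply: eq_bigr => i _.
rewrite mxE deg_in_sum (bigD1 i) //= [in RHS](bigD1 i) //=.
rewrite !mxE eqxx hirr mul1r subr0 natrX expr2 add0r; congr (_ + _).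
apply: eq_bigr => j /negPf hj; rewrite !mxE hj (eq_sym i j) hj !mul0r !sub0r mulrNN hsym.
by case: (adj (iota j) (iota i)); rewrite ?mul1r ?mul0r.
Qed.

End Graph.



Section Main.
Variable R : realType.

Lemma dotv_suml (I : finType) n (c : I -> R) (w : I -> 'rV[R]_n) v :
  dotv (\sum_i c i *: w i) v = \sum_i c i * dotv (w i) v.
Proof.
rewrite dotvE; under eq_bigr do rewrite summxE big_distrl.
rewrite exchange_big /=; apply: eq_bigr => i _.
rewrite dotvE mulr_sumr; apply: eq_bigr => k _; by rewrite !mxE mulrA.
Qed.

Lemma dot_rows n (E : 'M[R]_n) i j : E *m E^T = 1%:M ->
  dotv (row i E) (row j E) = (i == j)%:R.
Proof.
move=> /matrixP/(_ i j); rewrite !mxE => <-.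
by rewrite dotvE; apply: eq_bigr => k _; rewrite !mxE.
Qed.

Lemma coordE n (E : 'M[R]_n) (u : 'rV[R]_n) i :
  (u *m E^T) 0 i = dotv u (row i E).
Proof. by rewrite dotvE mxE; apply: eq_bigr => k _; rewrite !mxE. Qed.

Lemma quad_diag n (A E : 'M[R]_n) (d : 'rV[R]_n) (u : 'rV[R]_n) :
  E *m E^T = 1%:M -> E *m A = diag_mx d *m E ->
  dotv (u *m A) u = \sum_i (u *m E^T) 0 i ^+ 2 * d 0 i /\
  dotv u u = \sum_i (u *m E^T) 0 i ^+ 2.
Proof.
move=> h hEA; have hEt : E^T *m E = 1%:M := mulmx1C h.
have key : E *m A *m E^T = diag_mx d by rewrite hEA -mulmxA h mulmx1.
set c := u *m E^T.
have hu : u = c *m E by rewrite /c -mulmxA hEt mulmx1.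
split.
  have -> : dotv (u *m A) u = dotv (c *m diag_mx d) c.
    by rewrite /dotv hu -key trmx_mul !mulmxA.
  rewrite dotvE; apply: eq_bigr => i _; rewrite mul_mx_diag !mxE; ring.
have -> : dotv u u = dotv c c.
  by rewrite /dotv hu trmx_mul !mulmxA -[c *m E *m E^T]mulmxA h mulmx1.
by rewrite dotvE; apply: eq_bigr => i _; rewrite expr2.
Qed.

End Main.

Unset Implicit Arguments.


Theorem mainTheorem10 (R : realType) (V : finType) (adj : rel V) (B : {set V})
  (k : nat) :
  simple_graph adj -> (2 <= #|B|)%N -> (1 <= k <= #|B|)%N ->
  let b : R := #|B|%:R in
  let S1 : R := (\sum_(x in B) deg adj x)%:R in
  let S2 : R := (\sum_(x in B) (deg adj x) ^ 2)%:R in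
  let S1' : R := (\sum_(x in B) deg_in adj B x)%:R in
  let q : R := (k.-1)%:R / (#|B| - k).+1%:R in
  (steklov_sigma R adj B k
     <= ((S1 + Num.sqrt (q * (b * (S2 + S1') - S1 ^+ 2))) / b)%:E)%E /\
  (S1 + Num.sqrt (q * (b * (S2 + S1') - S1 ^+ 2))) / b
     <= (S1 + Num.sqrt (q * (b * (S2 + S1) - S1 ^+ 2))) / b.
Proof.
move=> [hsym hirr] hB hk b S1 S2 S1' q.
have b0 : 0 < b by rewrite /b ltr0n; apply: leq_trans hB.
have q0 : 0 <= q by rewrite /q divr_ge0 ?ler0n.
split; last first.
  rewrite ler_pM2r ?invr_gt0 // lerD2l; apply: ler_wsqrtr.
  apply: ler_wpM2l => //; rewrite lerD2r ler_pM2l // lerD2l ler_nat.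
  apply: leq_sum => x _; apply: subset_leq_card; apply/fintype.subsetP => y.
  by rewrite !inE => /andP[_ ->].
have [E [d [hE hEA]]] := real_spectral (Lm_sym R B hsym).
have [htr htr2] := spectral_traces hE hEA.
have hS1 : S1 = \sum_i d 0 i by rewrite -htr tr_Lm.
have hS2 : S2 + S1' = \sum_i d 0 i ^+ 2 by rewrite -htr2 tr_Lm2.
set lam := (S1 + Num.sqrt (q * (b * (S2 + S1') - S1 ^+ 2))) / b.
set I := [set i | (d 0 i <= lam)%R].
have hkI : (k <= #|I|)%N.
  have := count_bound (d 0) hk; rewrite -hS1 -hS2; exact.
pose g (j : 'I_k) : 'I_#|B| := enum_val (widen_ord hkI j).
have gI j : g j \in I by apply: enum_valP.
have ginj : injective g.
  move=> j1 j2 /enum_val_inj /(congr1 val) /= h; exact: val_inj.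
pose Xt := [tuple ext (B := B) (row (g j) E) | j < k].
pose W : {vspace fspace R V} := <<Xt>>%VS.
have XtE (j : 'I_k) : Xt`_j = ext (B := B) (row (g j) E) by rewrite nth_mktuple.
have dot0 (v : 'rV[R]_#|B|) : dotv 0 v = 0 by rewrite /dotv mul0mx mxE.
have hfree : free Xt.
  apply/freeP => c hc j.
  have : \sum_i c i *: row (g i) E = 0.
    apply: ext_inj; rewrite ext_sum -[RHS]hc; apply: eq_bigr => i _; by rewrite XtE.
  move=> /(congr1 (fun u => dotv u (row (g j) E))); rewrite dotv_suml dot0.
  rewrite (bigD1 j) //= big1 ?addr0.
    by rewrite dot_rows // eqxx mulr1.
  by move=> i hij; rewrite dot_rows // (inj_eq ginj) (negPf hij) mulr0.
have hdim : \dim W = k by move: hfree; rewrite /free size_tuple => /eqP.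
apply: (@le_trans _ _ (ereal_sup [set rayleigh adj B f | f in
    [set f : fspace R V | (f \in W)%VS /\ f != 0]])).
  by apply: ereal_inf_lbound; exists W.
apply: ge_ereal_sup => _ [f [fW f0] <-].
have hf := coord_span fW.
set u := \sum_i coord Xt i f *: row (g i) E.
have hfu : f = ext u by rewrite {1}hf /u ext_sum; apply: eq_bigr => i _; rewrite XtE.
have u0 : u != 0.
  apply: contra_neq f0 => h; rewrite hfu h; apply/ffunP => x; rewrite !ffunE.
  by apply: big1 => i _; rewrite mxE.
have [hq1 hq2] := quad_diag u hE hEA.
have pos : 0 < dotv u u := dotv_gt0 u0.
rewrite /rayleigh hfu bnorm_ext (energy_ext hsym) (gt_eqF pos) lee_fin ler_pdivrMr //.
rewrite hq1 hq2 mulr_sumr; apply: ler_sum => i _; rewrite [lam * _]mulrC.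
have hci : i \notin I -> (u *m E^T) 0 i = 0.
  move=> hi; rewrite coordE /u dotv_suml big1 // => j _; rewrite dot_rows //.
  have : g j != i by apply: contraNneq hi => <-; exact: gI.
  by move=> /negPf ->; rewrite mulr0.
case: (boolP (i \in I)) => hi.
  apply: ler_wpM2l; first exact: sqr_ge0.
  by move: hi; rewrite inE.
by rewrite hci // expr0n /= !mul0r.
Qed.
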